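(* Let $r_0>0$ and let $s>\sqrt{2}$ be arbitrary. Consider the stationary closed Nambu–Goto string in the five-dimensional Schwarzschild spacetime given by the embedding $$t=\frac{s r_0\,\tau}{\sqrt{2}},\quad r=s r_0,\quad \theta=\frac{\pi}{4},\quad \phi=\sigma,\quad \psi=\sigma+\tau,\qquad \tau\in\mathbb{R},\ \sigma\in\mathbb{R}/2\pi\mathbb{Z}.$$ Then this string is unstable under linear perturbations: there exist an integer $k$, a complex number $\omega$ with $\operatorname{Im}\omega>0$, and a nonzero constant vector $(c^1,c^2,c^3)\in\mathbb{C}^3$ such that $f^A(\tau,\sigma)=c^A e^{-i\omega\tau+ik\sigma}$ solves the linearized Nambu–Goto equation about this string.
   Context: The five-dimensional Schwarzschild spacetime with horizon radius $r_0>0$ has metric $$g=-\Big(1-\frac{r_0^2}{r^2}\Big)dt^2+\Big(1-\frac{r_0^2}{r^2}\Big)^{-1}dr^2+r^2\big[d\theta^2+\sin^2\theta\,d\phi^2+\cos^2\theta\,d\psi^2\big],$$ with $\theta\in(0,\pi/2)$ and $\phi,\psi\in\mathbb{R}/2\pi\mathbb{Z}$; units with speed of light $1$, signature $(-,+,+,+,+)$. A Nambu–Goto string is a timelike embedding $X^\mu(\xi^a)$ of a 2-dimensional worldsheet $N$ (coordinates $\xi^a=(\tau,\sigma)$) extremizing the area $-T\int d^2\xi\sqrt{|\det G|}$, where $G_{ab}=g_{\mu\nu}\partial_aX^\mu\partial_bX^\nu$ is the induced metric with Levi-Civita connection $D_a$; the equation of motion is $K^\mu{}_{ab}G^{ab}=0$,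 where $K^\mu{}_{ab}=D_aD_bX^\mu+\Gamma^\mu_{\nu\lambda}\partial_aX^\nu\partial_bX^\lambda$ is the second fundamental form (the given embedding satisfies it for every $s>\sqrt2$). Linear perturbations: choose an orthonormal frame $n_A{}^\mu$ ($A=1,2,3$) of the normal bundle of $N$ ($g_{\mu\nu}n_A{}^\mu\partial_aX^\nu=0$, $g_{\mu\nu}n_A{}^\mu n_B{}^\nu=\delta_{AB}$; e.g. $n_1=\frac{\sqrt{s^2-1}}{s}\partial_r$, $n_2=\frac{1}{sr_0}\partial_\theta$, $n_3=\frac{s^2}{\sqrt{(s^2-2)(s^2-1)}}\partial_t-\frac{\sqrt{2(s^2-1)}}{sr_0\sqrt{s^2-2}}(\partial_\phi-\partial_\psi)$), and write a normal perturbation as $\delta X^\mu=f^An_A{}^\mu$ with functions $f^A$ on $N$. Define $K_{Aab}=g_{\mu\nu}n_A{}^\mu K^\nu{}_{ab}$, the normal connection $\mu_{ABa}=g_{\mu\nu}n_A{}^\mu\partial_a n_B{}^\nu+\Gamma_{\alpha\beta\gamma}n_A{}^\alpha n_B{}^\beta\partial_aX^\gamma$ (antisymmetric in $A,B$), and $\mathscr{D}_af^B=D_af^B-\mu_A{}^B{}_af^A$, with frame indices raised/lowered by $\delta_{AB}$ and worldsheet indices by $G_{ab}$. The linearized Nambu–Goto equation is $$\mathscr{D}_a\mathscr{D}^af^B+\Big(K_A{}^{ab}K^B{}_{ab}+R_{\alpha\beta}n_A{}^\alpha n^{B\beta}-R_{\alpha\beta\gamma\delta}n_A{}^\alpha n_C{}^\beta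 n^{B\gamma}n^{C\delta}\Big)f^A=0,$$ where $R^\mu{}_{\nu\lambda\rho}=\Gamma^\mu_{\nu\rho,\lambda}-\Gamma^\mu_{\nu\lambda,\rho}+\Gamma^\mu_{\lambda\delta}\Gamma^\delta_{\nu\rho}-\Gamma^\mu_{\rho\delta}\Gamma^\delta_{\nu\lambda}$ and $R_{\nu\rho}=R^\mu{}_{\nu\mu\rho}$ are the spacetime Riemann and Ricci tensors. A mode $f^A\propto e^{-i\omega\tau+ik\sigma}$ with $\operatorname{Im}\omega>0$ grows exponentially in $\tau$; the string is called unstable if such a mode solution exists. *)

(* Defs.v *)
From Stdlib Require Import Reals Lra List ZArith.
From Coquelicot Require Import Coquelicot.
Open Scope R_scope.

Definition sumR (n : nat) (F : nat -> R) : R :=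
  fold_right Rplus 0 (map F (seq 0 n)).

(** Spacetime points: x : nat -> R, coordinates
    x 0 = t, x 1 = r, x 2 = theta, x 3 = phi, x 4 = psi. *)
Definition pt := nat -> R.

Definition pd (i : nat) (F : pt -> R) (x : pt) : R :=
  Derive (fun y => F (fun j => if Nat.eqb j i then y else x j)) (x i).

Definition wpd (a : nat) (F : R -> R -> R) (tau sigma : R) : R :=
  if Nat.eqb a 0 then Derive (fun t => F t sigma) tau
  else Derive (fun u => F tau u) sigma.

Definition gdiag (r0 : R) (mu : nat) (x : pt) : R :=
  let r := x 1%nat in let th := x 2%nat in
  match mu with
  | 0%nat => - (1 - r0 ^ 2 / r ^ 2)
  | 1%nat => / (1 - r0 ^ 2 / r ^ 2)
  | 2%nat => r ^ 2
  | 3%nat => r ^ 2 * (sin th) ^ 2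
  | _ => r ^ 2 * (cos th) ^ 2
  end.

Definition gmet (r0 : R) (mu nu : nat) (x : pt) : R :=
  if Nat.eqb mu nu then gdiag r0 mu x else 0.

Definition ginv (r0 : R) (mu nu : nat) (x : pt) : R :=
  if Nat.eqb mu nu then / gdiag r0 mu x else 0.

Definition Chr (r0 : R) (mu nu la : nat) (x : pt) : R :=
  / 2 * sumR 5 (fun de => ginv r0 mu de x *
     (pd nu (gmet r0 de la) x + pd la (gmet r0 de nu) x - pd de (gmet r0 nu la) x)).

Definition ChrL (r0 : R) (al be ga : nat) (x : pt) : R :=
  sumR 5 (fun de => gmet r0 al de x * Chr r0 de be ga x).

Definition Riem (r0 : R) (mu nu la rho : nat) (x : pt) : R :=
  pd la (Chr r0 mu nu rho) x - pd rho (Chr r0 mu nu la) x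
  + sumR 5 (fun de => Chr r0 mu la de x * Chr r0 de nu rho x
                     - Chr r0 mu rho de x * Chr r0 de nu la x).

Definition RiemL (r0 : R) (al be ga de : nat) (x : pt) : R :=
  sumR 5 (fun mu => gmet r0 al mu x * Riem r0 mu be ga de x).

Definition Ric (r0 : R) (nu rho : nat) (x : pt) : R :=
  sumR 5 (fun mu => Riem r0 mu nu mu rho x).

Definition Xemb (r0 s : R) (tau sigma : R) : pt :=
  fun mu => match mu with
  | 0%nat => s * r0 * tau / sqrt 2
  | 1%nat => s * r0
  | 2%nat => PI / 4
  | 3%nat => sigma
  | _ => sigma + tau
  end.

Definition dX (r0 s : R) (a mu : nat) (tau sigma : R) : R :=
  wpd a (fun t u => Xemb r0 s t u mu) tau sigma.

Definition Gind (r0 s : R) (a b : nat) (tau sigma : R) : R :=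
  sumR 5 (fun mu => sumR 5 (fun nu =>
    gmet r0 mu nu (Xemb r0 s tau sigma) * dX r0 s a mu tau sigma * dX r0 s b nu tau sigma)).

Definition Gdet (r0 s : R) (tau sigma : R) : R :=
  Gind r0 s 0 0 tau sigma * Gind r0 s 1 1 tau sigma
  - Gind r0 s 0 1 tau sigma * Gind r0 s 1 0 tau sigma.

Definition Ginv (r0 s : R) (a b : nat) (tau sigma : R) : R :=
  match a, b with
  | 0%nat, 0%nat => Gind r0 s 1 1 tau sigma / Gdet r0 s tau sigma
  | 1%nat, 1%nat => Gind r0 s 0 0 tau sigma / Gdet r0 s tau sigma
  | 0%nat, _ => - Gind r0 s 0 1 tau sigma / Gdet r0 s tau sigma
  | _, _ => - Gind r0 s 1 0 tau sigma / Gdet r0 s tau sigma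
  end.

Definition wChr (r0 s : R) (c a b : nat) (tau sigma : R) : R :=
  / 2 * sumR 2 (fun d => Ginv r0 s c d tau sigma *
     (wpd a (Gind r0 s d b) tau sigma + wpd b (Gind r0 s d a) tau sigma
      - wpd d (Gind r0 s a b) tau sigma)).

Definition Kff (r0 s : R) (mu a b : nat) (tau sigma : R) : R :=
  wpd a (dX r0 s b mu) tau sigma
  - sumR 2 (fun c => wChr r0 s c a b tau sigma * dX r0 s c mu tau sigma)
  + sumR 5 (fun nu => sumR 5 (fun la =>
      Chr r0 mu nu la (Xemb r0 s tau sigma) * dX r0 s a nu tau sigma * dX r0 s b la tau sigma)).

(** The orthonormal normal frame n_A^mu (A = 0,1,2 stand for A = 1,2,3 of the
    paper), given as functions on the worldsheet (here constant). *)
Definition nframe (r0 s : R) (A mu : nat) (tau sigma : R) : R :=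
  match A, mu with
  | 0%nat, 1%nat => sqrt (s ^ 2 - 1) / s
  | 1%nat, 2%nat => / (s * r0)
  | 2%nat, 0%nat => s ^ 2 / sqrt ((s ^ 2 - 2) * (s ^ 2 - 1))
  | 2%nat, 3%nat => - (sqrt (2 * (s ^ 2 - 1)) / (s * r0 * sqrt (s ^ 2 - 2)))
  | 2%nat, 4%nat => sqrt (2 * (s ^ 2 - 1)) / (s * r0 * sqrt (s ^ 2 - 2))
  | _, _ => 0
  end.

Definition KA (r0 s : R) (A a b : nat) (tau sigma : R) : R :=
  sumR 5 (fun mu => sumR 5 (fun nu =>
    gmet r0 mu nu (Xemb r0 s tau sigma) * nframe r0 s A mu tau sigma * Kff r0 s nu a b tau sigma)).

Definition ncon (r0 s : R) (A B a : nat) (tau sigma : R) : R :=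
  sumR 5 (fun mu => sumR 5 (fun nu =>
    gmet r0 mu nu (Xemb r0 s tau sigma) * nframe r0 s A mu tau sigma
    * wpd a (nframe r0 s B nu) tau sigma))
  + sumR 5 (fun al => sumR 5 (fun be => sumR 5 (fun ga =>
      ChrL r0 al be ga (Xemb r0 s tau sigma) * nframe r0 s A al tau sigma
      * nframe r0 s B be tau sigma * dX r0 s a ga tau sigma))).

Definition Pot (r0 s : R) (A B : nat) (tau sigma : R) : R :=
  let x := Xemb r0 s tau sigma in
  let n := fun C mu => nframe r0 s C mu tau sigma in
  sumR 2 (fun a => sumR 2 (fun b => sumR 2 (fun c => sumR 2 (fun d =>
    Ginv r0 s a c tau sigma * Ginv r0 s b d tau sigma
    * KA r0 s A c d tau sigma * KA r0 s B a b tau sigma))))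
  + sumR 5 (fun al => sumR 5 (fun be => Ric r0 al be x * n A al * n B be))
  - sumR 3 (fun C => sumR 5 (fun al => sumR 5 (fun be => sumR 5 (fun ga => sumR 5 (fun de =>
      RiemL r0 al be ga de x * n A al * n C be * n B ga * n C de))))).

Definition Dn (r0 s : R) (f : nat -> R -> R -> R) (B b : nat) (tau sigma : R) : R :=
  wpd b (f B) tau sigma - sumR 3 (fun A => ncon r0 s A B b tau sigma * f A tau sigma).

Definition LinNG (r0 s : R) (f : nat -> R -> R -> R) (B : nat) (tau sigma : R) : R :=
  sumR 2 (fun a => sumR 2 (fun b => Ginv r0 s a b tau sigma *
     (wpd a (Dn r0 s f B b) tau sigma
      - sumR 2 (fun c => wChr r0 s c a b tau sigma * Dn r0 s f B c tau sigma)
      - sumR 3 (fun A => ncon r0 s A B a tau sigma * Dn r0 s f A b tau sigma))))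
  + sumR 3 (fun A => Pot r0 s A B tau sigma * f A tau sigma).

Definition solves_real (r0 s : R) (f : nat -> R -> R -> R) : Prop :=
  forall (B : nat), (B < 3)%nat -> forall tau sigma : R, LinNG r0 s f B tau sigma = 0.

(** Complex perturbations: the equation has real coefficients, so a complex
    solution means real and imaginary parts both solve it. *)
Definition solves (r0 s : R) (f : nat -> R -> R -> C) : Prop :=
  solves_real r0 s (fun A t u => fst (f A t u)) /\
  solves_real r0 s (fun A t u => snd (f A t u)).

Definition cexp (z : C) : C := (exp (fst z) * cos (snd z), exp (fst z) * sin (snd z)).

Definition mode (omega : C) (k : Z) (c : nat -> C) : nat -> R -> R -> C :=
  fun A tau sigma =>
    Cmult (c A) (cexp (Cplus (Cmult (Cmult (0, -1) omega) (tau, 0))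
                             (Cmult (0, 1) (IZR k * sigma, 0)))).

(* Main.v *)
Require Import Defs.
From Stdlib Require Import Reals ZArith.
From Coquelicot Require Import Coquelicot.
From Stdlib Require Import Lra Lia List Setoid Morphisms FunctionalExtensionality.
Open Scope R_scope.

Definition gd (r0 : R) (mu : nat) (r th : R) : R :=
  match mu with
  | 0%nat => - (1 - r0 ^ 2 / r ^ 2)
  | 1%nat => / (1 - r0 ^ 2 / r ^ 2)
  | 2%nat => r ^ 2
  | 3%nat => r ^ 2 * (sin th) ^ 2
  | _ => r ^ 2 * (cos th) ^ 2
  end.
Definition dgr (r0 : R) (mu : nat) (r th : R) : R :=
  match mu with
  | 0%nat => - (2 * r0 ^ 2 / r ^ 3)
  | 1%nat => - (2 * r0 ^ 2 / r ^ 3) / (1 - r0 ^ 2 / r ^ 2) ^ 2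
  | 2%nat => 2 * r
  | 3%nat => 2 * r * (sin th) ^ 2
  | _ => 2 * r * (cos th) ^ 2
  end.
Definition dgt (mu : nat) (r th : R) : R :=
  match mu with
  | 0%nat | 1%nat | 2%nat => 0
  | 3%nat => r ^ 2 * sin (2 * th)
  | _ => - (r ^ 2 * sin (2 * th))
  end.
Definition drr (r0 : R) (mu : nat) (r th : R) : R :=
  match mu with
  | 0%nat => 6 * r0 ^ 2 / r ^ 4
  | 1%nat => 6 * r0 ^ 2 / r ^ 4 / (1 - r0 ^ 2 / r ^ 2) ^ 2
             + 2 * (2 * r0 ^ 2 / r ^ 3) ^ 2 / (1 - r0 ^ 2 / r ^ 2) ^ 3
  | 2%nat => 2
  | 3%nat => 2 * (sin th) ^ 2
  | _ => 2 * (cos th) ^ 2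
  end.
Definition drt (mu : nat) (r th : R) : R :=
  match mu with
  | 0%nat | 1%nat | 2%nat => 0
  | 3%nat => 2 * r * sin (2 * th)
  | _ => - (2 * r * sin (2 * th))
  end.
Definition dtt (mu : nat) (r th : R) : R :=
  match mu with
  | 0%nat | 1%nat | 2%nat => 0
  | 3%nat => 2 * r ^ 2 * cos (2 * th)
  | _ => - (2 * r ^ 2 * cos (2 * th))
  end.

Section Base.
Variable r0 : R.
Hypothesis hr0 : 0 < r0.

Lemma Fnz r : r0 < r -> 1 - r0 ^ 2 / r ^ 2 <> 0.
Proof.
  intros h. assert (0 < r) by lra.
  replace (1 - r0 ^ 2 / r ^ 2) with ((r ^ 2 - r0 ^ 2) / r ^ 2) by (field; lra).
  unfold Rdiv; apply Rmult_integral_contrapositive_currified; [nra | apply Rinv_neq_0_compat; nra].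
Qed.

Lemma d_gd_r a r th : r0 < r -> is_derive (fun y => gd r0 a y th) r (dgr r0 a r th).
Proof.
  intros h. assert (0 < r) by lra. pose proof (Fnz r h).
  destruct a as [|[|[|[|a]]]]; simpl gd; simpl dgr; auto_derive; repeat split; try lra; try field; try (split; lra).
  all: try (split; [lra|]); try field; auto.
  all: intro; nra.
Qed.

Ltac nz := match goal with
  | |- _ /\ _ => split; nz
  | |- ?a * ?b <> 0 => apply Rmult_integral_contrapositive_currified; nz
  | _ => first [lra | (intro; nra) | (match goal with H : 1 - _ <> 0 |- _ => let E := fresh in intro E; apply H; rewrite <- E; field; lra end)]
  end.
Ltac bdsolve := auto_derive; repeat split; try lra;
  try (rewrite ?sin_2a, ?cos_2a; field); try nz.

Lemma d_gd_t a r th : is_derive (fun y => gd r0 a r y) th (dgt a r th).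
Proof. destruct a as [|[|[|[|a]]]]; simpl gd; simpl dgt; bdsolve. Qed.

Lemma d_dgr_r a r th : r0 < r -> is_derive (fun y => dgr r0 a y th) r (drr r0 a r th).
Proof.
  intros h. assert (0 < r) by lra. pose proof (Fnz r h).
  destruct a as [|[|[|[|a]]]]; simpl dgr; simpl drr; bdsolve.
Qed.

Lemma d_dgr_t a r th : is_derive (fun y => dgr r0 a r y) th (drt a r th).
Proof. destruct a as [|[|[|[|a]]]]; simpl dgr; simpl drt; bdsolve. Qed.

Lemma d_dgt_r a r th : is_derive (fun y => dgt a y th) r (drt a r th).
Proof. destruct a as [|[|[|[|a]]]]; simpl dgt; simpl drt; bdsolve. Qed.

Lemma d_dgt_t a r th : is_derive (fun y => dgt a r y) th (dtt a r th).
Proof. destruct a as [|[|[|[|a]]]]; simpl dgt; simpl dtt; bdsolve. Qed.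
End Base.

Lemma sumR_S n F : sumR (S n) F = sumR n F + F n.
Proof.
  unfold sumR. rewrite seq_S, map_app, fold_right_app. simpl.
  generalize (map F (seq 0 n)). intro l. induction l; simpl; [ring|rewrite IHl; ring].
Qed.

Lemma sumR_ext n F G : (forall i, (i < n)%nat -> F i = G i) -> sumR n F = sumR n G.
Proof.
  induction n; intros H; [reflexivity|]. rewrite !sumR_S, IHn, H; auto.
Qed.

Lemma is_derive_sumR n (F : nat -> R -> R) dF x :
  (forall i, (i < n)%nat -> is_derive (F i) x (dF i)) ->
  is_derive (fun y => sumR n (fun i => F i y)) x (sumR n dF).
Proof.
  induction n; intros H.
  - unfold sumR; simpl. apply (is_derive_const 0).
  - rewrite sumR_S. eapply is_derive_ext.
    { intro t. symmetry. apply sumR_S. }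
    apply (is_derive_plus (fun y => sumR n (fun i => F i y)) (F n)); auto.
Qed.

Definition upd (x : pt) (i : nat) (y : R) : pt := fun j => if Nat.eqb j i then y else x j.

Definition DG (r0 : R) (a b i : nat) (r th : R) : R :=
  if Nat.eqb a b then
    (if Nat.eqb i 1 then dgr r0 a r th else if Nat.eqb i 2 then dgt a r th else 0)
  else 0.

Lemma pd_gmet r0 (hr0 : 0 < r0) i a b x : r0 < x 1%nat ->
  pd i (gmet r0 a b) x = DG r0 a b i (x 1%nat) (x 2%nat).
Proof.
  intros h. unfold pd, gmet, DG.
  destruct (Nat.eqb a b).
  - destruct i as [|[|[|i]]].
    + erewrite Derive_ext with (g := fun _ => gd r0 a (x 1%nat) (x 2%nat)); [apply Derive_const| intros; reflexivity].
    + erewrite Derive_ext with (g := fun y => gd r0 a y (x 2%nat)); [|intros; reflexivity].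
      apply is_derive_unique, d_gd_r; auto.
    + erewrite Derive_ext with (g := fun y => gd r0 a (x 1%nat) y); [|intros; reflexivity].
      apply is_derive_unique, d_gd_t.
    + erewrite Derive_ext with (g := fun _ => gd r0 a (x 1%nat) (x 2%nat)); [apply Derive_const| intros; reflexivity].
  - apply Derive_const.
Qed.

Lemma isd_mult f g x df dg : is_derive f x df -> is_derive g x dg ->
  is_derive (fun y => f y * g y) x (df * g x + f x * dg).
Proof. intros. apply (is_derive_mult f g x df dg); auto. intros; apply Rmult_comm. Qed.
Lemma isd_plus f g x df dg : is_derive f x df -> is_derive g x dg ->
  is_derive (fun y => f y + g y) x (df + dg).
Proof. intros. apply (is_derive_plus f g x df dg); auto. Qed.
Lemma isd_minus f g x df dg : is_derive f x df -> is_derive g x dg ->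
  is_derive (fun y => f y - g y) x (df - dg).
Proof. intros. apply (is_derive_minus f g x df dg); auto. Qed.
Lemma isd_const c x : is_derive (fun _ : R => c) x 0.
Proof. apply (is_derive_const c). Qed.

Definition chrf (r0 : R) (mu nu la : nat) (r th : R) : R :=
  / 2 * sumR 5 (fun de => (if Nat.eqb mu de then / gd r0 mu r th else 0) *
     (DG r0 de la nu r th + DG r0 de nu la r th - DG r0 nu la de r th)).

Lemma Chr_eq r0 (hr0 : 0 < r0) mu nu la x : r0 < x 1%nat ->
  Chr r0 mu nu la x = chrf r0 mu nu la (x 1%nat) (x 2%nat).
Proof.
  intros h. unfold Chr, chrf. f_equal. apply sumR_ext. intros de _.
  unfold ginv. rewrite !pd_gmet; auto.
Qed.

Definition DDG (r0 : R) (a b i j : nat) (r th : R) : R :=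
  if Nat.eqb a b then
    (if Nat.eqb i 1 then (if Nat.eqb j 1 then drr r0 a r th else drt a r th)
     else if Nat.eqb i 2 then (if Nat.eqb j 1 then drt a r th else dtt a r th)
     else 0)
  else 0.

Definition GDd (r0 : R) (mu j : nat) (r th : R) : R :=
  if Nat.eqb j 1 then dgr r0 mu r th else dgt mu r th.

Lemma d_DG_r r0 (hr0 : 0 < r0) a b i r th : r0 < r ->
  is_derive (fun y => DG r0 a b i y th) r (DDG r0 a b i 1 r th).
Proof.
  intros h. unfold DG, DDG. destruct (Nat.eqb a b); [|apply isd_const].
  destruct i as [|[|[|i]]]; simpl; try apply isd_const.
  - apply d_dgr_r; auto.
  - apply d_dgt_r.
Qed.

Lemma d_DG_t r0 a b i r th :
  is_derive (fun y => DG r0 a b i r y) th (DDG r0 a b i 2 r th).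
Proof.
  unfold DG, DDG. destruct (Nat.eqb a b); [|apply isd_const].
  destruct i as [|[|[|i]]]; simpl; try apply isd_const.
  - apply d_dgr_t.
  - apply d_dgt_t.
Qed.

Definition dchr (r0 : R) (j mu nu la : nat) (r th : R) : R :=
  / 2 * sumR 5 (fun de =>
     (if Nat.eqb mu de then - GDd r0 mu j r th / (gd r0 mu r th) ^ 2 else 0) *
       (DG r0 de la nu r th + DG r0 de nu la r th - DG r0 nu la de r th)
     + (if Nat.eqb mu de then / gd r0 mu r th else 0) *
       (DDG r0 de la nu j r th + DDG r0 de nu la j r th - DDG r0 nu la de j r th)).

Lemma d_chrf_r r0 (hr0 : 0 < r0) mu nu la r th : r0 < r -> gd r0 mu r th <> 0 ->
  is_derive (fun y => chrf r0 mu nu la y th) r (dchr r0 1 mu nu la r th).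
Proof.
  intros h hg. unfold chrf, dchr. apply is_derive_scal.
  apply is_derive_sumR. intros de _.
  apply (isd_mult (fun y => if Nat.eqb mu de then / gd r0 mu y th else 0)
    (fun y => DG r0 de la nu y th + DG r0 de nu la y th - DG r0 nu la de y th)).
  - destruct (Nat.eqb mu de); [|apply isd_const].
    unfold GDd; simpl Nat.eqb; cbv iota. apply (is_derive_inv (fun y => gd r0 mu y th)); auto. apply d_gd_r; auto.
  - apply isd_minus; [apply isd_plus|]; apply d_DG_r; auto.
Qed.

Lemma d_chrf_t r0 mu nu la r th : gd r0 mu r th <> 0 ->
  is_derive (fun y => chrf r0 mu nu la r y) th (dchr r0 2 mu nu la r th).
Proof.
  intros hg. unfold chrf, dchr. apply is_derive_scal.
  apply is_derive_sumR. intros de _.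
  apply (isd_mult (fun y => if Nat.eqb mu de then / gd r0 mu r y else 0)
    (fun y => DG r0 de la nu r y + DG r0 de nu la r y - DG r0 nu la de r y)).
  - destruct (Nat.eqb mu de); [|apply isd_const].
    unfold GDd; simpl Nat.eqb; cbv iota. apply (is_derive_inv (fun y => gd r0 mu r y)); auto. apply d_gd_t.
  - apply isd_minus; [apply isd_plus|]; apply d_DG_t.
Qed.

Definition DCH (r0 : R) (la mu nu rho : nat) (r th : R) : R :=
  if Nat.eqb la 1 then dchr r0 1 mu nu rho r th
  else if Nat.eqb la 2 then dchr r0 2 mu nu rho r th else 0.

Lemma pd_Chr r0 (hr0 : 0 < r0) la mu nu rho x : r0 < x 1%nat ->
  gd r0 mu (x 1%nat) (x 2%nat) <> 0 ->
  pd la (Chr r0 mu nu rho) x = DCH r0 la mu nu rho (x 1%nat) (x 2%nat).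
Proof.
  intros h hg. unfold pd, DCH.
  destruct la as [|[|[|la]]]; simpl Nat.eqb; cbv iota.
  - erewrite Derive_ext with (g := fun _ => chrf r0 mu nu rho (x 1%nat) (x 2%nat)).
    + apply Derive_const.
    + intros t. rewrite Chr_eq; auto.
  - rewrite Derive_ext_loc with (g := fun t => chrf r0 mu nu rho t (x 2%nat)).
    + apply is_derive_unique, d_chrf_r; auto.
    + assert (hp : 0 < x 1%nat - r0) by lra.
      exists (mkposreal _ hp). intros t Ht.
      unfold ball in Ht; simpl in Ht; unfold AbsRing_ball, abs, minus, plus, opp in Ht; simpl in Ht.
      apply Rabs_lt_between' in Ht.
      rewrite Chr_eq; auto. simpl. lra.
  - erewrite Derive_ext with (g := fun t => chrf r0 mu nu rho (x 1%nat) t).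
    + apply is_derive_unique, d_chrf_t; auto.
    + intros t. rewrite Chr_eq; auto.
  - erewrite Derive_ext with (g := fun _ => chrf r0 mu nu rho (x 1%nat) (x 2%nat)).
    + apply Derive_const.
    + intros t. rewrite Chr_eq; auto.
Qed.

Definition riemf (r0 : R) (mu nu la rho : nat) (r th : R) : R :=
  DCH r0 la mu nu rho r th - DCH r0 rho mu nu la r th
  + sumR 5 (fun de => chrf r0 mu la de r th * chrf r0 de nu rho r th
                     - chrf r0 mu rho de r th * chrf r0 de nu la r th).

Lemma Riem_eq r0 (hr0 : 0 < r0) mu nu la rho x : r0 < x 1%nat ->
  gd r0 mu (x 1%nat) (x 2%nat) <> 0 ->
  Riem r0 mu nu la rho x = riemf r0 mu nu la rho (x 1%nat) (x 2%nat).
Proof.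
  intros h hg. unfold Riem, riemf. rewrite !pd_Chr; auto. f_equal.
  apply sumR_ext. intros. rewrite !Chr_eq; auto.
Qed.

Lemma s4sq : sin (PI / 4) ^ 2 = / 2.
Proof. rewrite sin_PI4. assert (h := sqrt2_neq_0). replace ((1 / sqrt 2) ^ 2) with (1 / (sqrt 2 * sqrt 2)) by (field; auto).
  rewrite sqrt_sqrt; lra. Qed.
Lemma c4sq : cos (PI / 4) ^ 2 = / 2.
Proof. rewrite cos_PI4. assert (h := sqrt2_neq_0). replace ((1 / sqrt 2) ^ 2) with (1 / (sqrt 2 * sqrt 2)) by (field; auto).
  rewrite sqrt_sqrt; lra. Qed.
Lemma s24 : sin (2 * (PI / 4)) = 1.
Proof. replace (2 * (PI / 4)) with (PI / 2) by field. apply sin_PI2. Qed.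
Lemma c24 : cos (2 * (PI / 4)) = 0.
Proof. replace (2 * (PI / 4)) with (PI / 2) by field. apply cos_PI2. Qed.

Definition ricf r0 nu rho r th := sumR 5 (fun mu => riemf r0 mu nu mu rho r th).

Ltac evalpt := unfold ricf, riemf, DCH, dchr, chrf, DG, DDG, GDd, gd, dgr, dgt, drr, drt, dtt, sumR;
  cbn [fold_right map seq Nat.eqb];
  rewrite ?s4sq, ?c4sq, ?s24, ?c24.

Definition dXv (r0 s : R) (a mu : nat) : R :=
  match a with
  | 0%nat => match mu with 0%nat => s * r0 / sqrt 2 | 1%nat | 2%nat | 3%nat => 0 | _ => 1 end
  | _ => match mu with 0%nat | 1%nat | 2%nat => 0 | _ => 1 end
  end.

Lemma dX_val r0 s a mu tau sigma : dX r0 s a mu tau sigma = dXv r0 s a mu.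
Proof.
  unfold dX, wpd, Xemb. destruct a as [|a]; simpl Nat.eqb; cbv iota;
  destruct mu as [|[|[|[|mu]]]]; simpl dXv; apply is_derive_unique; auto_derive; auto; try ring.
  all: try (field; apply sqrt2_neq_0).
Qed.

Lemma powred x c n : x * x = c -> x ^ (S (S n)) = c * x ^ n.
Proof. intros H. simpl. rewrite <- H. ring. Qed.

Ltac redpow w hw := repeat rewrite (powred w _ _ hw).

Definition gmv r0 s mu nu := if Nat.eqb mu nu then gd r0 mu (s * r0) (PI / 4) else 0.
Definition Gv r0 s a b := sumR 5 (fun mu => sumR 5 (fun nu => gmv r0 s mu nu * dXv r0 s a mu * dXv r0 s b nu)).

Lemma Gind_val r0 s a b tau sigma : Gind r0 s a b tau sigma = Gv r0 s a b.
Proof.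
  unfold Gind, Gv. apply sumR_ext; intros; apply sumR_ext; intros. rewrite !dX_val. reflexivity.
Qed.

Lemma Gv00 r0 s : 0 < r0 -> 1 < s -> Gv r0 s 0 0 = r0 ^ 2 / 2.
Proof.
  intros. unfold Gv, gmv, dXv, gd, sumR. cbn [fold_right map seq Nat.eqb]. rewrite ?s4sq, ?c4sq.
  assert (hw : sqrt 2 * sqrt 2 = 2) by (apply sqrt_sqrt; lra).
  assert (sqrt 2 <> 0) by (apply sqrt2_neq_0).
  Time field_simplify_eq; [ redpow (sqrt 2) hw; ring | ].
  repeat split; auto; try lra; intro; nra.
Qed.

Lemma sumR_0 n : sumR n (fun _ => 0) = 0.
Proof. induction n; [reflexivity|]. rewrite sumR_S, IHn; ring. Qed.

Lemma wpd_const (F : R -> R -> R) c a tau sigma : (forall t u, F t u = c) -> wpd a F tau sigma = 0.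
Proof.
  intros H. unfold wpd. destruct (Nat.eqb a 0).
  - rewrite Derive_ext with (g := fun _ => c); [apply Derive_const|intros; apply H].
  - rewrite Derive_ext with (g := fun _ => c); [apply Derive_const|intros; apply H].
Qed.

Lemma wChr_0 r0 s c a b tau sigma : wChr r0 s c a b tau sigma = 0.
Proof.
  unfold wChr. rewrite (sumR_ext _ _ (fun _ => 0)); [rewrite sumR_0; ring|].
  intros d _.
  assert (H : forall a' d' b', wpd a' (Gind r0 s d' b') tau sigma = 0)
    by (intros; apply (wpd_const _ (Gv r0 s d' b')); intros; apply Gind_val).
  rewrite !H. ring.
Qed.

Definition Kv r0 s mu a b := sumR 5 (fun nu => sumR 5 (fun la =>
   chrf r0 mu nu la (s * r0) (PI / 4) * dXv r0 s a nu * dXv r0 s b la)).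

Section Pt.
Variables r0 s : R.
Hypothesis hr0 : 0 < r0.
Hypothesis hs1 : 1 < s.

Lemma Rpt : r0 < s * r0.
Proof. nra. Qed.

Lemma gd_pt_nz mu : gd r0 mu (s * r0) (PI / 4) <> 0.
Proof.
  assert (h := Fnz r0 hr0 _ Rpt). assert (0 < s * r0) by nra.
  destruct mu as [|[|[|[|mu]]]]; unfold gd.
  - intro E; apply h; lra.
  - apply Rinv_neq_0_compat; auto.
  - apply pow_nonzero; lra.
  - rewrite s4sq. apply Rmult_integral_contrapositive_currified; [apply pow_nonzero; lra|lra].
  - rewrite c4sq. apply Rmult_integral_contrapositive_currified; [apply pow_nonzero; lra|lra].
Qed.

Lemma Chr_pt mu nu la tau sigma :
  Chr r0 mu nu la (Xemb r0 s tau sigma) = chrf r0 mu nu la (s * r0) (PI / 4).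
Proof. apply Chr_eq; auto. apply Rpt. Qed.

Lemma Riem_pt mu nu la rho tau sigma :
  Riem r0 mu nu la rho (Xemb r0 s tau sigma) = riemf r0 mu nu la rho (s * r0) (PI / 4).
Proof. apply Riem_eq; auto. apply Rpt. apply gd_pt_nz. Qed.

Definition riemLv al be ga de := sumR 5 (fun mu => gmv r0 s al mu * riemf r0 mu be ga de (s * r0) (PI / 4)).
Definition chrLv al be ga := sumR 5 (fun de => gmv r0 s al de * chrf r0 de be ga (s * r0) (PI / 4)).

Lemma RiemL_pt al be ga de tau sigma :
  RiemL r0 al be ga de (Xemb r0 s tau sigma) = riemLv al be ga de.
Proof. unfold RiemL, riemLv. apply sumR_ext; intros. rewrite Riem_pt. reflexivity. Qed.

Lemma Ric_pt nu rho tau sigma : Ric r0 nu rho (Xemb r0 s tau sigma) = ricf r0 nu rho (s * r0) (PI / 4).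
Proof. unfold Ric, ricf. apply sumR_ext; intros. rewrite Riem_pt. reflexivity. Qed.

Lemma ChrL_pt al be ga tau sigma : ChrL r0 al be ga (Xemb r0 s tau sigma) = chrLv al be ga.
Proof. unfold ChrL, chrLv. apply sumR_ext; intros. rewrite Chr_pt. reflexivity. Qed.

Lemma Kff_pt mu a b tau sigma : Kff r0 s mu a b tau sigma = Kv r0 s mu a b.
Proof.
  unfold Kff, Kv. rewrite (wpd_const _ (dXv r0 s b mu)); [|intros; apply dX_val].
  rewrite (sumR_ext 2 _ (fun _ => 0)); [rewrite sumR_0|intros; rewrite wChr_0; ring].
  rewrite Rminus_0_r, Rplus_0_l.
  apply sumR_ext; intros; apply sumR_ext; intros. rewrite Chr_pt, !dX_val. reflexivity.
Qed.

Definition KAv A a b := sumR 5 (fun mu => sumR 5 (fun nu =>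
    gmv r0 s mu nu * nframe r0 s A mu 0 0 * Kv r0 s nu a b)).

Lemma KA_pt A a b tau sigma : KA r0 s A a b tau sigma = KAv A a b.
Proof. unfold KA, KAv. apply sumR_ext; intros; apply sumR_ext; intros. rewrite Kff_pt. reflexivity. Qed.

Lemma wpd_nframe A mu a tau sigma : wpd a (nframe r0 s A mu) tau sigma = 0.
Proof. apply (wpd_const _ (nframe r0 s A mu 0 0)). intros; reflexivity. Qed.

Definition nconv A B a := sumR 5 (fun al => sumR 5 (fun be => sumR 5 (fun ga =>
      chrLv al be ga * nframe r0 s A al 0 0 * nframe r0 s B be 0 0 * dXv r0 s a ga))).

Lemma ncon_pt A B a tau sigma : ncon r0 s A B a tau sigma = nconv A B a.
Proof.
  unfold ncon, nconv.
  rewrite (sumR_ext 5 _ (fun _ => 0)); [rewrite sumR_0, Rplus_0_l|].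
  - apply sumR_ext; intros; apply sumR_ext; intros; apply sumR_ext; intros.
    rewrite ChrL_pt, dX_val. reflexivity.
  - intros. rewrite (sumR_ext 5 _ (fun _ => 0)); [apply sumR_0|]. intros.
    rewrite wpd_nframe. ring.
Qed.
End Pt.

Inductive sx := SZ | SV (x : R).
Definition sI (a : sx) : R := match a with SZ => 0 | SV x => x end.
Definition sadd (a b : sx) : sx :=
  match a, b with SZ, _ => b | _, SZ => a | SV x, SV y => SV (x + y) end.
Definition smul (a b : sx) : sx :=
  match a, b with SZ, _ => SZ | _, SZ => SZ | SV x, SV y => SV (x * y) end.
Definition sneg (a : sx) : sx := match a with SZ => SZ | SV x => SV (- x) end.
Definition ssub (a b : sx) : sx := sadd a (sneg b).
Definition sumS (n : nat) (F : nat -> sx) : sx := fold_right sadd SZ (map F (seq 0 n)).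

Lemma sI_sadd a b : sI (sadd a b) = sI a + sI b.
Proof. destruct a, b; simpl; ring. Qed.
Lemma sI_smul a b : sI (smul a b) = sI a * sI b.
Proof. destruct a, b; simpl; ring. Qed.
Lemma sI_sneg a : sI (sneg a) = - sI a.
Proof. destruct a; simpl; ring. Qed.
Lemma sI_ssub a b : sI (ssub a b) = sI a - sI b.
Proof. unfold ssub. rewrite sI_sadd, sI_sneg. ring. Qed.
Lemma sI_sumS n F : sI (sumS n F) = sumR n (fun i => sI (F i)).
Proof.
  unfold sumS, sumR. generalize (seq 0 n). intros l. induction l; simpl; [reflexivity|].
  rewrite sI_sadd, IHl. reflexivity.
Qed.

#[export] Instance sumR_proper n : Proper (pointwise_relation nat eq ==> eq) (sumR n).
Proof. intros F G H. apply sumR_ext. intros; apply H. Qed.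

Ltac sIs := repeat (first [setoid_rewrite sI_sumS | setoid_rewrite sI_smul | setoid_rewrite sI_sadd
   | setoid_rewrite sI_ssub | setoid_rewrite sI_sneg]).

Section S.
Variables r0 s : R.
Let r := s * r0.
Let th := PI / 4.

Definition gdS mu := SV (gd r0 mu r th).
Definition dgtS mu := match mu with 0%nat | 1%nat | 2%nat => SZ | _ => SV (dgt mu r th) end.
Definition DGS a b i :=
  if Nat.eqb a b then (if Nat.eqb i 1 then SV (dgr r0 a r th) else if Nat.eqb i 2 then dgtS a else SZ) else SZ.
Definition drtS mu := match mu with 0%nat | 1%nat | 2%nat => SZ | _ => SV (drt mu r th) end.
Definition dttS mu := match mu with 0%nat | 1%nat | 2%nat => SZ | _ => SV (dtt mu r th) end.
Definition DDGS a b i j :=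
  if Nat.eqb a b then
    (if Nat.eqb i 1 then (if Nat.eqb j 1 then SV (drr r0 a r th) else drtS a)
     else if Nat.eqb i 2 then (if Nat.eqb j 1 then drtS a else dttS a) else SZ)
  else SZ.
Definition GDdS mu j := if Nat.eqb j 1 then SV (dgr r0 mu r th) else dgtS mu.

Lemma DGS_ok a b i : sI (DGS a b i) = DG r0 a b i r th.
Proof.
  unfold DGS, DG. destruct (Nat.eqb a b); [|reflexivity].
  destruct (Nat.eqb i 1); [reflexivity|]. destruct (Nat.eqb i 2); [|reflexivity].
  destruct a as [|[|[|a]]]; reflexivity.
Qed.
Opaque DGS.
Lemma DDGS_ok a b i j : sI (DDGS a b i j) = DDG r0 a b i j r th.
Proof.
  unfold DDGS, DDG. destruct (Nat.eqb a b); [|reflexivity].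
  destruct (Nat.eqb i 1); [destruct (Nat.eqb j 1); [reflexivity|]|].
  - destruct a as [|[|[|a]]]; reflexivity.
  - destruct (Nat.eqb i 2); [|reflexivity]. destruct (Nat.eqb j 1); destruct a as [|[|[|a]]]; reflexivity.
Qed.
Opaque DDGS.
Lemma GDdS_ok mu j : sI (GDdS mu j) = GDd r0 mu j r th.
Proof. unfold GDdS, GDd. destruct (Nat.eqb j 1); [reflexivity|]. destruct mu as [|[|[|mu]]]; reflexivity. Qed.
Opaque GDdS.

Definition chrS mu nu la := smul (SV (/ 2)) (sumS 5 (fun de =>
   smul (if Nat.eqb mu de then SV (/ gd r0 mu r th) else SZ)
        (ssub (sadd (DGS de la nu) (DGS de nu la)) (DGS nu la de)))).

Lemma chrS_ok mu nu la : sI (chrS mu nu la) = chrf r0 mu nu la r th.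
Proof.
  unfold chrS, chrf. sIs. simpl sI. f_equal. apply sumR_ext. intros de _.
  rewrite !DGS_ok. destruct (Nat.eqb mu de); reflexivity.
Qed.
Opaque chrS.

Definition dchrS j mu nu la := smul (SV (/ 2)) (sumS 5 (fun de =>
   sadd (smul (if Nat.eqb mu de then smul (sneg (GDdS mu j)) (SV (/ (gd r0 mu r th) ^ 2)) else SZ)
              (ssub (sadd (DGS de la nu) (DGS de nu la)) (DGS nu la de)))
        (smul (if Nat.eqb mu de then SV (/ gd r0 mu r th) else SZ)
              (ssub (sadd (DDGS de la nu j) (DDGS de nu la j)) (DDGS nu la de j))))).

Lemma dchrS_ok j mu nu la : sI (dchrS j mu nu la) = dchr r0 j mu nu la r th.
Proof.
  unfold dchrS, dchr. sIs. simpl sI. f_equal. apply sumR_ext. intros de _.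
  rewrite !DGS_ok, !DDGS_ok. destruct (Nat.eqb mu de); simpl sI; [|reflexivity].
  rewrite sI_smul, sI_sneg, GDdS_ok. simpl sI. unfold Rdiv. reflexivity.
Qed.
Opaque dchrS.


Definition chrT mu nu la :=
  match mu, nu, la with
  | 0%nat, 0%nat, 1%nat | 0%nat, 1%nat, 0%nat => SV (/ (s * r0 * (s ^ 2 - 1)))
  | 1%nat, 0%nat, 0%nat => SV ((s ^ 2 - 1) / (s ^ 5 * r0))
  | 1%nat, 1%nat, 1%nat => SV (- / (s * r0 * (s ^ 2 - 1)))
  | 1%nat, 2%nat, 2%nat => SV (- (r0 * (s ^ 2 - 1) / s))
  | 1%nat, 3%nat, 3%nat | 1%nat, 4%nat, 4%nat => SV (- (r0 * (s ^ 2 - 1) / (2 * s)))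
  | 2%nat, 1%nat, 2%nat | 2%nat, 2%nat, 1%nat => SV (/ (s * r0))
  | 2%nat, 3%nat, 3%nat => SV (- / 2)
  | 2%nat, 4%nat, 4%nat => SV (/ 2)
  | 3%nat, 1%nat, 3%nat | 3%nat, 3%nat, 1%nat => SV (/ (s * r0))
  | 3%nat, 2%nat, 3%nat | 3%nat, 3%nat, 2%nat => SV 1
  | 4%nat, 1%nat, 4%nat | 4%nat, 4%nat, 1%nat => SV (/ (s * r0))
  | 4%nat, 2%nat, 4%nat | 4%nat, 4%nat, 2%nat => SV (-1)
  | _, _, _ => SZ
  end.

Definition dchrT j mu nu la :=
  match j with
  | 1%nat =>
    match mu, nu, la with
    | 0%nat, 0%nat, 1%nat | 0%nat, 1%nat, 0%nat => SV ((1 - 3 * s ^ 2) / (s ^ 2 * r0 ^ 2 * (s ^ 2 - 1) ^ 2))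
    | 1%nat, 0%nat, 0%nat => SV ((5 - 3 * s ^ 2) / (s ^ 6 * r0 ^ 2))
    | 1%nat, 1%nat, 1%nat => SV ((3 * s ^ 2 - 1) / (s ^ 2 * r0 ^ 2 * (s ^ 2 - 1) ^ 2))
    | 1%nat, 2%nat, 2%nat => SV (- ((s ^ 2 + 1) / s ^ 2))
    | 1%nat, 3%nat, 3%nat | 1%nat, 4%nat, 4%nat => SV (- ((s ^ 2 + 1) / (2 * s ^ 2)))
    | 2%nat, 1%nat, 2%nat | 2%nat, 2%nat, 1%nat | 3%nat, 1%nat, 3%nat | 3%nat, 3%nat, 1%nat
    | 4%nat, 1%nat, 4%nat | 4%nat, 4%nat, 1%nat => SV (- / (s ^ 2 * r0 ^ 2))
    | _, _, _ => SZ
    end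
  | 2%nat =>
    match mu, nu, la with
    | 1%nat, 3%nat, 3%nat => SV (- (r0 * (s ^ 2 - 1) / s))
    | 1%nat, 4%nat, 4%nat => SV (r0 * (s ^ 2 - 1) / s)
    | 3%nat, 2%nat, 3%nat | 3%nat, 3%nat, 2%nat | 4%nat, 2%nat, 4%nat | 4%nat, 4%nat, 2%nat => SV (-2)
    | _, _, _ => SZ
    end
  | _ => SZ
  end.

Section T.
Hypothesis hr0 : 0 < r0.
Hypothesis hs1 : 1 < s.

Ltac nzs := repeat split; try lra;
  try (apply Rgt_not_eq; nra); try (apply Rlt_not_eq; nra); try (intro; nra).

Ltac evT :=
  cbv [chrS dchrS sumS fold_right map seq sadd smul sneg ssub DGS DDGS GDdS dgtS drtS dttS Nat.eqb sI chrT dchrT];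
  cbv [gd dgr dgt drr drt dtt r th];
  rewrite ?s4sq, ?c4sq, ?s24, ?c24;
  first [reflexivity | (field; nzs)].

Lemma chrT_ok mu nu la : (mu < 5)%nat -> (nu < 5)%nat -> (la < 5)%nat ->
  sI (chrS mu nu la) = sI (chrT mu nu la).
Proof.
  intros H1 H2 H3.
  destruct mu as [|[|[|[|[|mu]]]]]; try lia; destruct nu as [|[|[|[|[|nu]]]]]; try lia;
  destruct la as [|[|[|[|[|la]]]]]; try lia; evT.
Qed.

Lemma dchrT_ok j mu nu la : (j = 1 \/ j = 2)%nat -> (mu < 5)%nat -> (nu < 5)%nat -> (la < 5)%nat ->
  sI (dchrS j mu nu la) = sI (dchrT j mu nu la).
Proof.
  intros [-> | ->] H1 H2 H3;
  destruct mu as [|[|[|[|[|mu]]]]]; try lia; destruct nu as [|[|[|[|[|nu]]]]]; try lia;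
  destruct la as [|[|[|[|[|la]]]]]; try lia; evT.
Qed.
End T.
Section U.
Hypothesis hr0 : 0 < r0.
Hypothesis hs1 : 1 < s.
Definition DCHS la mu nu rho :=
  if Nat.eqb la 1 then dchrT 1 mu nu rho else if Nat.eqb la 2 then dchrT 2 mu nu rho else SZ.
Lemma DCHS_ok la mu nu rho : (mu < 5)%nat -> (nu < 5)%nat -> (rho < 5)%nat ->
  sI (DCHS la mu nu rho) = DCH r0 la mu nu rho r th.
Proof.
  intros. unfold DCHS, DCH. destruct (Nat.eqb la 1); [rewrite <- dchrT_ok; auto; apply dchrS_ok|].
  destruct (Nat.eqb la 2); [rewrite <- dchrT_ok; auto; apply dchrS_ok|reflexivity].
Qed.
Lemma chrT_ok' mu nu la : (mu < 5)%nat -> (nu < 5)%nat -> (la < 5)%nat ->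
  sI (chrT mu nu la) = chrf r0 mu nu la r th.
Proof. intros. rewrite <- chrT_ok; auto. apply chrS_ok. Qed.
Opaque DCHS.

Definition riemS mu nu la rho :=
  sadd (ssub (DCHS la mu nu rho) (DCHS rho mu nu la))
       (sumS 5 (fun de => ssub (smul (chrT mu la de) (chrT de nu rho)) (smul (chrT mu rho de) (chrT de nu la)))).
Lemma riemS_ok mu nu la rho : (mu < 5)%nat -> (nu < 5)%nat -> (la < 5)%nat -> (rho < 5)%nat ->
  sI (riemS mu nu la rho) = riemf r0 mu nu la rho r th.
Proof.
  intros. unfold riemS, riemf. sIs. rewrite !DCHS_ok; auto. f_equal. apply sumR_ext; intros. rewrite !chrT_ok'; auto.
Qed.
Opaque riemS.

Definition gmS a b := if Nat.eqb a b then SV (gd r0 a r th) else SZ.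
Lemma gmS_ok a b : sI (gmS a b) = gmv r0 s a b.
Proof. unfold gmS, gmv. destruct (Nat.eqb a b); reflexivity. Qed.
Opaque gmS.

Definition riemLS al be ga de := sumS 5 (fun mu => smul (gmS al mu) (riemS mu be ga de)).
Lemma riemLS_ok al be ga de : (be < 5)%nat -> (ga < 5)%nat -> (de < 5)%nat ->
  sI (riemLS al be ga de) = riemLv r0 s al be ga de.
Proof. intros. unfold riemLS, riemLv. sIs. apply sumR_ext; intros. rewrite gmS_ok, riemS_ok; auto. Qed.
Opaque riemLS.

Definition ricS nu rho := sumS 5 (fun mu => riemS mu nu mu rho).
Lemma ricS_ok nu rho : (nu < 5)%nat -> (rho < 5)%nat -> sI (ricS nu rho) = ricf r0 nu rho r th.
Proof. intros. unfold ricS, ricf. sIs. apply sumR_ext; intros. rewrite riemS_ok; auto. Qed.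
Opaque ricS.

Definition chrLS al be ga := sumS 5 (fun de => smul (gmS al de) (chrT de be ga)).
Lemma chrLS_ok al be ga : (be < 5)%nat -> (ga < 5)%nat -> sI (chrLS al be ga) = chrLv r0 s al be ga.
Proof. intros. unfold chrLS, chrLv. sIs. apply sumR_ext; intros. rewrite gmS_ok, chrT_ok'; auto. Qed.
Opaque chrLS.

Definition dXS a mu :=
  match a with
  | 0%nat => match mu with 0%nat => SV (s * r0 / sqrt 2) | 1%nat | 2%nat | 3%nat => SZ | _ => SV 1 end
  | _ => match mu with 0%nat | 1%nat | 2%nat => SZ | _ => SV 1 end
  end.
Lemma dXS_ok a mu : sI (dXS a mu) = dXv r0 s a mu.
Proof. destruct a as [|a]; destruct mu as [|[|[|[|mu]]]]; reflexivity. Qed.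
Opaque dXS.

Definition nfS A mu :=
  match A, mu with
  | 0%nat, 1%nat => SV (sqrt (s ^ 2 - 1) / s)
  | 1%nat, 2%nat => SV (/ (s * r0))
  | 2%nat, 0%nat => SV (s ^ 2 / sqrt ((s ^ 2 - 2) * (s ^ 2 - 1)))
  | 2%nat, 3%nat => SV (- (sqrt (2 * (s ^ 2 - 1)) / (s * r0 * sqrt (s ^ 2 - 2))))
  | 2%nat, 4%nat => SV (sqrt (2 * (s ^ 2 - 1)) / (s * r0 * sqrt (s ^ 2 - 2)))
  | _, _ => SZ
  end.
Lemma nfS_ok A mu t u : sI (nfS A mu) = nframe r0 s A mu t u.
Proof. destruct A as [|[|[|A]]]; destruct mu as [|[|[|[|[|mu]]]]]; reflexivity. Qed.
Opaque nfS.

Definition KvS mu a b := sumS 5 (fun nu => sumS 5 (fun la => smul (smul (chrT mu nu la) (dXS a nu)) (dXS b la))).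
Lemma KvS_ok mu a b : (mu < 5)%nat -> sI (KvS mu a b) = Kv r0 s mu a b.
Proof. intros. unfold KvS, Kv. sIs. apply sumR_ext; intros; apply sumR_ext; intros. rewrite chrT_ok', !dXS_ok; auto. Qed.
Opaque KvS.

Definition KAvS A a b := sumS 5 (fun mu => sumS 5 (fun nu => smul (smul (gmS mu nu) (nfS A mu)) (KvS nu a b))).
Lemma KAvS_ok A a b : sI (KAvS A a b) = KAv r0 s A a b.
Proof. unfold KAvS, KAv. sIs. apply sumR_ext; intros; apply sumR_ext; intros. rewrite gmS_ok, (nfS_ok _ _ 0 0), KvS_ok; auto. Qed.
Opaque KAvS.

Definition nconS A B a := sumS 5 (fun al => sumS 5 (fun be => sumS 5 (fun ga =>
   smul (smul (smul (chrLS al be ga) (nfS A al)) (nfS B be)) (dXS a ga)))).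
Lemma nconS_ok A B a : sI (nconS A B a) = nconv r0 s A B a.
Proof. unfold nconS, nconv. sIs. do 3 (apply sumR_ext; intros). rewrite chrLS_ok, !(nfS_ok _ _ 0 0), dXS_ok; auto. Qed.
Opaque nconS.

End U.
Definition GinvS a b := SV (Ginv r0 s a b 0 0).
End S.

Lemma Ginv_const r0 s a b tau sigma : Ginv r0 s a b tau sigma = Ginv r0 s a b 0 0.
Proof. unfold Ginv, Gdet. rewrite !Gind_val. reflexivity. Qed.

Definition PotS r0 s A B :=
  ssub (sadd
    (sumS 2 (fun a => sumS 2 (fun b => sumS 2 (fun c => sumS 2 (fun d =>
       smul (smul (smul (GinvS r0 s a c) (GinvS r0 s b d)) (KAvS r0 s A c d)) (KAvS r0 s B a b))))))
    (sumS 5 (fun al => sumS 5 (fun be => smul (nfS r0 s A al) (smul (nfS r0 s B be) (ricS r0 s al be))))))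
    (sumS 3 (fun C => sumS 5 (fun al => sumS 5 (fun be => sumS 5 (fun ga => sumS 5 (fun de =>
       smul (nfS r0 s A al) (smul (nfS r0 s C be) (smul (nfS r0 s B ga) (smul (nfS r0 s C de)
         (riemLS r0 s al be ga de)))))))))).

Ltac desc := first
  [ rewrite sI_sumS; apply sumR_ext; let i := fresh "i" in let Hi := fresh "Hi" in intros i Hi; desc
  | match goal with |- _ * _ * _ * _ = sI (smul (smul (smul (GinvS _ _ _ _) _) _) _) =>
       rewrite !sI_smul; f_equal; [f_equal; [f_equal|]|] end
  | idtac ].

Lemma Pot_S r0 s A B tau sigma : 0 < r0 -> 1 < s -> Pot r0 s A B tau sigma = sI (PotS r0 s A B).
Proof.
  intros h1 h2. unfold Pot, PotS. cbv zeta. rewrite sI_ssub, sI_sadd.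
  f_equal; [f_equal|]; desc.
  all: first [ rewrite (KA_pt r0 s h1 h2), KAvS_ok; auto
             | rewrite Ginv_const; reflexivity
             | rewrite !sI_smul, !(nfS_ok r0 s _ _ tau sigma);
               first [ rewrite (Ric_pt r0 s h1 h2), ricS_ok; auto; ring
                     | rewrite (RiemL_pt r0 s h1 h2), riemLS_ok; auto; ring ] ].
Qed.

Lemma ncon_S r0 s A B a tau sigma : 0 < r0 -> 1 < s -> ncon r0 s A B a tau sigma = sI (nconS r0 s A B a).
Proof. intros. rewrite nconS_ok; auto. apply ncon_pt; auto. Qed.

Section W.
Variables r0 s : R.
Hypothesis hr0 : 0 < r0.
Hypothesis hs : 2 < s ^ 2.
Hypothesis hs1 : 1 < s.

Lemma sq2 : sqrt ((s ^ 2 - 2) * (s ^ 2 - 1)) = sqrt (s ^ 2 - 2) * sqrt (s ^ 2 - 1).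
Proof. apply sqrt_mult; lra. Qed.
Lemma sq3 : sqrt (2 * (s ^ 2 - 1)) = sqrt 2 * sqrt (s ^ 2 - 1).
Proof. apply sqrt_mult; lra. Qed.

Ltac sqfield :=
  rewrite ?sq2, ?sq3;
  let hw := fresh in let hp := fresh in let hq := fresh in
  assert (hw : sqrt 2 * sqrt 2 = 2) by (apply sqrt_sqrt; lra);
  assert (hp : sqrt (s ^ 2 - 1) * sqrt (s ^ 2 - 1) = s ^ 2 - 1) by (apply sqrt_sqrt; lra);
  assert (hq : sqrt (s ^ 2 - 2) * sqrt (s ^ 2 - 2) = s ^ 2 - 2) by (apply sqrt_sqrt; lra);
  assert (sqrt 2 <> 0) by (apply Rgt_not_eq, sqrt_lt_R0; lra);
  assert (sqrt (s ^ 2 - 1) <> 0) by (apply Rgt_not_eq, sqrt_lt_R0; lra);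
  assert (sqrt (s ^ 2 - 2) <> 0) by (apply Rgt_not_eq, sqrt_lt_R0; lra);
  field_simplify_eq;
  [ redpow (sqrt 2) hw; redpow (sqrt (s ^ 2 - 1)) hp; redpow (sqrt (s ^ 2 - 2)) hq; ring
  | repeat split; auto; try lra; try (apply Rgt_not_eq; nra); try (apply Rlt_not_eq; nra); intro; nra ].

Ltac evS := lazy [PotS nconS sumS fold_right map seq sadd smul sneg ssub GinvS KAvS KvS gmS nfS dXS ricS riemS
   riemLS chrLS DCHS chrT dchrT Nat.eqb sI];
  cbv [gd dgr dgt drr drt dtt]; rewrite ?s4sq, ?c4sq, ?s24, ?c24.

Definition GiC a b :=
  match a, b with
  | 0%nat, 0%nat => - (4 / (r0 ^ 2 * (s ^ 2 - 2)))
  | 1%nat, 1%nat => - (2 / (s ^ 2 * r0 ^ 2 * (s ^ 2 - 2)))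
  | _, _ => 2 / (r0 ^ 2 * (s ^ 2 - 2))
  end.

Lemma Gv_00 : Gv r0 s 0 0 = r0 ^ 2 / 2.
Proof. cbv [Gv gmv dXv sumR fold_right map seq Nat.eqb gd]; rewrite ?s4sq, ?c4sq; sqfield. Qed.
Lemma Gv_01 : Gv r0 s 0 1 = (s * r0) ^ 2 / 2.
Proof. cbv [Gv gmv dXv sumR fold_right map seq Nat.eqb gd]; rewrite ?s4sq, ?c4sq; sqfield. Qed.
Lemma Gv_10 : Gv r0 s 1 0 = (s * r0) ^ 2 / 2.
Proof. cbv [Gv gmv dXv sumR fold_right map seq Nat.eqb gd]; rewrite ?s4sq, ?c4sq; sqfield. Qed.
Lemma Gv_11 : Gv r0 s 1 1 = (s * r0) ^ 2.
Proof. cbv [Gv gmv dXv sumR fold_right map seq Nat.eqb gd]; rewrite ?s4sq, ?c4sq; sqfield. Qed.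

Lemma Ginv_val a b tau sigma : (a < 2)%nat -> (b < 2)%nat -> Ginv r0 s a b tau sigma = GiC a b.
Proof.
  intros Ha Hb. unfold Ginv, Gdet. rewrite !Gind_val, Gv_00, Gv_01, Gv_10, Gv_11.
  destruct a as [|[|a]]; try lia; destruct b as [|[|b]]; try lia;
  cbv [GiC]; field; repeat split; try lra; try (apply Rgt_not_eq; nra); try (apply Rlt_not_eq; nra).
  all: replace ((r0 * (s * r0)) ^ 2 * 4 - (s * r0 * (s * r0)) ^ 2 * 2) with (2 * (r0 ^ 2 * s) ^ 2 * (2 - s ^ 2)) by ring;
    repeat apply Rmult_integral_contrapositive_currified; try lra; apply pow_nonzero; nra.
Qed.

Ltac nzs := repeat split; try lra;
  try (apply Rgt_not_eq; nra); try (apply Rlt_not_eq; nra); try (intro; nra).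

Lemma ric_zero nu rho : (nu < 5)%nat -> (rho < 5)%nat -> sI (ricS r0 s nu rho) = 0.
Proof.
  intros H1 H2. destruct nu as [|[|[|[|[|nu]]]]]; try lia; destruct rho as [|[|[|[|[|rho]]]]]; try lia;
  evS; first [reflexivity | field; nzs].
Qed.

Definition KAC (A c d : nat) : R :=
  match A, c, d with
  | 0%nat, 0%nat, 0%nat => - (r0 * sqrt (s ^ 2 - 1) * (s ^ 2 - 1) / (2 * s ^ 2))
  | 0%nat, 1%nat, 1%nat => - (r0 * sqrt (s ^ 2 - 1))
  | 0%nat, _, _ => - (r0 * sqrt (s ^ 2 - 1) / 2)
  | 1%nat, 1%nat, 1%nat => 0
  | 1%nat, _, _ => s * r0 / 2
  | _, _, _ => 0
  end.
Definition KACS A c d := match A with 0%nat | 1%nat => SV (KAC A c d) | _ => SZ end.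
Lemma KACS_ok A c d : sI (KACS A c d) = KAC A c d.
Proof. destruct A as [|[|A]]; reflexivity. Qed.

Lemma KA_val A c d tau sigma : (A < 3)%nat -> (c < 2)%nat -> (d < 2)%nat -> KA r0 s A c d tau sigma = KAC A c d.
Proof.
  intros H1 H2 H3. rewrite KA_pt by lra. rewrite <- KAvS_ok by lra.
  destruct A as [|[|[|A]]]; try lia; destruct c as [|[|c]]; try lia; destruct d as [|[|d]]; try lia;
  cbv [KAC]; evS; first [reflexivity | sqfield].
Qed.

Definition PotS2 A B :=
  ssub
    (sumS 2 (fun a => sumS 2 (fun b => sumS 2 (fun c => sumS 2 (fun d =>
       smul (smul (smul (SV (GiC a c)) (SV (GiC b d))) (KACS A c d)) (KACS B a b))))))
    (sumS 3 (fun C => sumS 5 (fun al => sumS 5 (fun be => sumS 5 (fun ga => sumS 5 (fun de =>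
       smul (nfS r0 s A al) (smul (nfS r0 s C be) (smul (nfS r0 s B ga) (smul (nfS r0 s C de)
         (riemLS r0 s al be ga de)))))))))).

Lemma Pot_S2 A B tau sigma : (A < 3)%nat -> (B < 3)%nat -> Pot r0 s A B tau sigma = sI (PotS2 A B).
Proof.
  intros HA HB. unfold Pot, PotS2. cbv zeta. rewrite sI_ssub.
  rewrite (sumR_ext 5 _ (fun _ => 0)), sumR_0, Rplus_0_r.
  2:{ intros al Hal. rewrite (sumR_ext 5 _ (fun _ => 0)), sumR_0; [reflexivity|].
      intros be Hbe. rewrite (Ric_pt r0 s hr0 hs1), <- ricS_ok, ric_zero; auto. ring. }
  f_equal; desc.
  all: first [ rewrite !sI_smul, !KACS_ok; simpl sI; rewrite !Ginv_val, !KA_val; auto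
             | rewrite !sI_smul, !(nfS_ok r0 s _ _ tau sigma);
               rewrite (RiemL_pt r0 s hr0 hs1), riemLS_ok; auto; ring ].
Qed.

Definition ca := sqrt (s ^ 2 - 2) / (sqrt 2 * s).
Definition cb := sqrt (s ^ 2 - 1) / (sqrt 2 * sqrt (s ^ 2 - 2)).

Definition Ptab A B :=
  match A, B with
  | 0%nat, 0%nat => 2 / (r0 ^ 2 * (s ^ 2 - 2))
  | 1%nat, 1%nat => - (2 * (s ^ 2 + 1) / (s ^ 2 * r0 ^ 2 * (s ^ 2 - 2)))
  | 2%nat, 2%nat => 2 / (s ^ 2 * r0 ^ 2 * (s ^ 2 - 2))
  | _, _ => 0
  end.

Definition NCtab A B a :=
  match A, B, a with
  | 0%nat, 2%nat, 0%nat => - ca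
  | 2%nat, 0%nat, 0%nat => ca
  | 1%nat, 2%nat, 0%nat => cb
  | 2%nat, 1%nat, 0%nat => - cb
  | 1%nat, 2%nat, 1%nat => 2 * cb
  | 2%nat, 1%nat, 1%nat => - (2 * cb)
  | _, _, _ => 0
  end.

Lemma Pot_val A B tau sigma : (A < 3)%nat -> (B < 3)%nat -> Pot r0 s A B tau sigma = Ptab A B.
Proof.
  intros HA HB. rewrite Pot_S2 by lia.
  destruct A as [|[|[|A]]]; try lia; destruct B as [|[|[|B]]]; try lia;
  lazy [PotS2 sumS fold_right map seq sadd smul sneg ssub KACS nfS gmS riemS riemLS DCHS chrT dchrT Nat.eqb sI];
  cbv [gd KAC Ptab GiC]; rewrite ?s4sq, ?c4sq; first [reflexivity | sqfield].
Qed.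

Lemma ncon_val A B a tau sigma : (A < 3)%nat -> (B < 3)%nat -> (a < 2)%nat ->
  ncon r0 s A B a tau sigma = NCtab A B a.
Proof.
  intros HA HB Ha. rewrite ncon_S by lra.
  destruct A as [|[|[|A]]]; try lia; destruct B as [|[|[|B]]]; try lia; destruct a as [|[|a]]; try lia;
  lazy [nconS sumS fold_right map seq sadd smul sneg ssub nfS gmS chrLS chrT dXS Nat.eqb sI];
  cbv [gd NCtab ca cb]; rewrite ?s4sq, ?c4sq; first [reflexivity | sqfield].
Qed.
End W.

Definition Ef (lr li kk t u : R) : C :=
  (exp (lr * t) * cos (li * t + kk * u), exp (lr * t) * sin (li * t + kk * u)).
Definition pr (b : bool) (z : C) : R := if b then fst z else snd z.
Definition Csum (n : nat) (F : nat -> C) : C := fold_right Cplus (RtoC 0) (map F (seq 0 n)).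

Lemma Csum_S n F : Csum (S n) F = Cplus (Csum n F) (F n).
Proof.
  unfold Csum. rewrite seq_S, map_app, fold_right_app. simpl.
  generalize (map F (seq 0 n)). intro l. induction l; simpl.
  - apply injective_projections; simpl; ring.
  - rewrite IHl. apply injective_projections; simpl; ring.
Qed.

Lemma pr_plus b x y : pr b (Cplus x y) = pr b x + pr b y.
Proof. destruct b; reflexivity. Qed.
Lemma pr_minus b x y : pr b (Cminus x y) = pr b x - pr b y.
Proof. destruct b; simpl; ring. Qed.
Lemma pr_RtoC_mult b r z : pr b (Cmult (RtoC r) z) = r * pr b z.
Proof. destruct b; simpl; ring. Qed.

Lemma pr_CsumE b n (F : nat -> C) E :
  pr b (Cmult (Csum n F) E) = sumR n (fun i => pr b (Cmult (F i) E)).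
Proof.
  induction n.
  - unfold Csum, sumR; destruct b; simpl; ring.
  - rewrite Csum_S, sumR_S, <- IHn. destruct b; simpl; ring.
Qed.

Lemma pr_scalE b r z E : pr b (Cmult (Cmult (RtoC r) z) E) = r * pr b (Cmult z E).
Proof. destruct b; simpl; ring. Qed.
Lemma pr_minusE b x y E : pr b (Cmult (Cminus x y) E) = pr b (Cmult x E) - pr b (Cmult y E).
Proof. destruct b; simpl; ring. Qed.
Lemma pr_plusE b x y E : pr b (Cmult (Cplus x y) E) = pr b (Cmult x E) + pr b (Cmult y E).
Proof. destruct b; simpl; ring. Qed.

Lemma dEt b z lr li kk t0 u :
  is_derive (fun t => pr b (Cmult z (Ef lr li kk t u))) t0 (pr b (Cmult (Cmult (lr, li) z) (Ef lr li kk t0 u))).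
Proof. destruct z as [zr zi]; destruct b; unfold Ef; simpl; auto_derive; auto; ring. Qed.
Lemma dEu b z lr li kk t u0 :
  is_derive (fun u => pr b (Cmult z (Ef lr li kk t u))) u0 (pr b (Cmult (Cmult (0, kk) z) (Ef lr li kk t u0))).
Proof. destruct z as [zr zi]; destruct b; unfold Ef; simpl; auto_derive; auto; ring. Qed.

Definition pa (lr li kk : R) (a : nat) : C := if Nat.eqb a 0 then (lr, li) else (0, kk).

Lemma wpd_mode b z lr li kk a tau sigma :
  wpd a (fun t u => pr b (Cmult z (Ef lr li kk t u))) tau sigma
  = pr b (Cmult (Cmult (pa lr li kk a) z) (Ef lr li kk tau sigma)).
Proof.
  unfold wpd, pa. destruct (Nat.eqb a 0); apply is_derive_unique; [apply dEt | apply dEu].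
Qed.

Lemma wpd_ext a (F G : R -> R -> R) tau sigma : (forall t u, F t u = G t u) -> wpd a F tau sigma = wpd a G tau sigma.
Proof. intros H. unfold wpd. destruct (Nat.eqb a 0); apply Derive_ext; intros; apply H. Qed.

Section L.
Variables r0 s lr li kk : R.
Variable b : bool.
Variable c : nat -> C.
Variables (Gc : nat -> nat -> R) (Nc : nat -> nat -> nat -> R) (Pc : nat -> nat -> R).
Hypothesis hG : forall a b' t u, (a < 2)%nat -> (b' < 2)%nat -> Ginv r0 s a b' t u = Gc a b'.
Hypothesis hN : forall A B a t u, (A < 3)%nat -> (B < 3)%nat -> (a < 2)%nat -> ncon r0 s A B a t u = Nc A B a.
Hypothesis hP : forall A B t u, (A < 3)%nat -> (B < 3)%nat -> Pot r0 s A B t u = Pc A B.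

Definition fmode (A : nat) (t u : R) : R := pr b (Cmult (c A) (Ef lr li kk t u)).

Definition DDc B b' := Cminus (Cmult (pa lr li kk b') (c B)) (Csum 3 (fun A => Cmult (RtoC (Nc A B b')) (c A))).

Lemma Dn_eq B b' t u : (B < 3)%nat -> (b' < 2)%nat ->
  Dn r0 s fmode B b' t u = pr b (Cmult (DDc B b') (Ef lr li kk t u)).
Proof.
  intros HB Hb. unfold Dn, DDc. rewrite pr_minusE, pr_CsumE. f_equal.
  - unfold fmode. apply wpd_mode.
  - apply sumR_ext; intros A HA. rewrite hN; auto. rewrite pr_scalE. reflexivity.
Qed.

Definition LLc B :=
  Cplus (Csum 2 (fun a => Csum 2 (fun b' => Cmult (RtoC (Gc a b'))
            (Cminus (Cmult (pa lr li kk a) (DDc B b')) (Csum 3 (fun A => Cmult (RtoC (Nc A B a)) (DDc A b')))))))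
        (Csum 3 (fun A => Cmult (RtoC (Pc A B)) (c A))).

Lemma LinNG_eq B tau sigma : (B < 3)%nat ->
  LinNG r0 s fmode B tau sigma = pr b (Cmult (LLc B) (Ef lr li kk tau sigma)).
Proof.
  intros HB. unfold LinNG, LLc. rewrite pr_plusE, !pr_CsumE. f_equal.
  - apply sumR_ext; intros a Ha. rewrite pr_CsumE. apply sumR_ext; intros b' Hb'.
    rewrite hG; auto. rewrite pr_scalE. f_equal.
    rewrite (sumR_ext 2 _ (fun _ => 0)) by (intros; rewrite wChr_0; ring). rewrite sumR_0, Rminus_0_r.
    rewrite pr_minusE, pr_CsumE. f_equal.
    + rewrite (wpd_ext a _ (fun t u => pr b (Cmult (DDc B b') (Ef lr li kk t u)))).
      * rewrite wpd_mode. reflexivity.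
      * intros; apply Dn_eq; auto.
    + apply sumR_ext; intros A HA. rewrite hN, Dn_eq, pr_scalE; auto.
  - apply sumR_ext; intros A HA. rewrite hP; auto. unfold fmode. rewrite pr_scalE. reflexivity.
Qed.
End L.

Section Alg.
Variables r0 s kk x y : R.
Hypothesis hr0 : 0 < r0.
Hypothesis hs : 2 < s ^ 2.
Hypothesis hs0 : 0 < s.

Definition nuC : C := (x, y).
Definition kIC : C := (0, kk).
Definition aC : C := RtoC (ca s).
Definition bC : C := RtoC (cb s).
Definition wC : C := RtoC ((s ^ 2 - 2) / s ^ 2).
Definition pp A : C := RtoC (- (r0 ^ 2 * (s ^ 2 - 2)) * Ptab r0 s A A).

Definition d0C : C := Cplus (Cminus (Cminus (Cmult (RtoC 4) (Cmult nuC nuC)) (Cmult (RtoC 4) (Cmult aC aC)))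
                                (Cmult wC (Cmult kIC kIC))) (pp 0).
Definition d1C : C := Cplus (Cminus (Cmult (RtoC 4) (Cmult nuC nuC))
                                (Cmult wC (Cminus (Cmult kIC kIC) (Cmult (RtoC 4) (Cmult bC bC))))) (pp 1).
Definition d2C : C := Cplus (Cminus (Cminus (Cmult (RtoC 4) (Cmult nuC nuC)) (Cmult (RtoC 4) (Cmult aC aC)))
                                (Cmult wC (Cminus (Cmult kIC kIC) (Cmult (RtoC 4) (Cmult bC bC))))) (pp 2).
Definition eC : C := Cmult (RtoC 8) (Cmult nuC aC).
Definition fC : C := Copp (Cmult (RtoC 4) (Cmult wC (Cmult kIC bC))).

Definition Lp (B A : nat) : C :=
  match B, A with
  | 0%nat, 0%nat => d0C | 0%nat, 2%nat => Copp eC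
  | 1%nat, 1%nat => d1C | 1%nat, 2%nat => fC
  | 2%nat, 0%nat => eC | 2%nat, 1%nat => Copp fC | 2%nat, 2%nat => d2C
  | _, _ => RtoC 0
  end.

Lemma LL_lin (c : nat -> C) B : (B < 3)%nat ->
  LLc x (y + kk / 2) kk c (GiC r0 s) (NCtab s) (Ptab r0 s) B
  = Cmult (RtoC (- / (r0 ^ 2 * (s ^ 2 - 2)))) (Csum 3 (fun A => Cmult (Lp B A) (c A))).
Proof.
  intros HB.
  assert (s ^ 2 - 2 <> 0) by lra. assert (r0 <> 0) by lra. assert (s <> 0) by lra.
  destruct (c 0%nat) as [c0r c0i] eqn:E0, (c 1%nat) as [c1r c1i] eqn:E1, (c 2%nat) as [c2r c2i] eqn:E2.
  destruct B as [|[|[|B]]]; try lia;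
  unfold LLc, DDc, Csum, pa, Lp, d0C, d1C, d2C, eC, fC, nuC, kIC, aC, bC, wC, pp;
  cbv [fold_right map seq Nat.eqb GiC NCtab Ptab]; rewrite ?E0, ?E1, ?E2;
  apply injective_projections; simpl; field; repeat split; auto; intro; nra.
Qed.

Definition cvec (A : nat) : C :=
  match A with
  | 0%nat => Cmult eC d1C
  | 1%nat => Copp (Cmult fC d0C)
  | _ => Cmult d0C d1C
  end.
Definition detC : C := Cplus (Cmult d0C (Cmult d1C d2C)) (Cplus (Cmult (Cmult eC eC) d1C) (Cmult (Cmult fC fC) d0C)).

Lemma Lp_null B : (B < 3)%nat ->
  Csum 3 (fun A => Cmult (Lp B A) (cvec A)) = if Nat.eqb B 2 then detC else RtoC 0.
Proof.
  intros HB. destruct B as [|[|[|B]]]; try lia; unfold Csum, Lp, cvec, detC; cbv [fold_right map seq Nat.eqb];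
  generalize d0C d1C d2C eC fC; intros; ring.
Qed.
End Alg.

Section D.
Variables r0 s kk x y : R.
Hypothesis hr0 : 0 < r0.
Hypothesis hs : 2 < s ^ 2.
Hypothesis hs0 : 0 < s.

Lemma aC2 : Cmult (aC s) (aC s) = RtoC ((s ^ 2 - 2) / (2 * s ^ 2)).
Proof.
  unfold aC, ca. assert (h1 : sqrt 2 * sqrt 2 = 2) by (apply sqrt_sqrt; lra).
  assert (h2 : sqrt (s ^ 2 - 2) * sqrt (s ^ 2 - 2) = s ^ 2 - 2) by (apply sqrt_sqrt; lra).
  assert (sqrt 2 <> 0) by (apply Rgt_not_eq, sqrt_lt_R0; lra).
  apply injective_projections; cbv [Cmult Cplus Cminus Copp RtoC fst snd]; [|ring].
  replace (sqrt (s ^ 2 - 2) / (sqrt 2 * s) * (sqrt (s ^ 2 - 2) / (sqrt 2 * s)) - 0 * 0)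
    with ((sqrt (s ^ 2 - 2) * sqrt (s ^ 2 - 2)) / ((sqrt 2 * sqrt 2) * s ^ 2)) by (field; split; lra).
  rewrite h1, h2. field. lra.
Qed.

Lemma bC2 : Cmult (bC s) (bC s) = RtoC ((s ^ 2 - 1) / (2 * (s ^ 2 - 2))).
Proof.
  unfold bC, cb. assert (h1 : sqrt 2 * sqrt 2 = 2) by (apply sqrt_sqrt; lra).
  assert (h2 : sqrt (s ^ 2 - 2) * sqrt (s ^ 2 - 2) = s ^ 2 - 2) by (apply sqrt_sqrt; lra).
  assert (h3 : sqrt (s ^ 2 - 1) * sqrt (s ^ 2 - 1) = s ^ 2 - 1) by (apply sqrt_sqrt; lra).
  assert (sqrt 2 <> 0) by (apply Rgt_not_eq, sqrt_lt_R0; lra).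
  assert (sqrt (s ^ 2 - 2) <> 0) by (apply Rgt_not_eq, sqrt_lt_R0; lra).
  apply injective_projections; cbv [Cmult Cplus Cminus Copp RtoC fst snd]; [|ring].
  replace (sqrt (s ^ 2 - 1) / (sqrt 2 * sqrt (s ^ 2 - 2)) * (sqrt (s ^ 2 - 1) / (sqrt 2 * sqrt (s ^ 2 - 2))) - 0 * 0)
    with ((sqrt (s ^ 2 - 1) * sqrt (s ^ 2 - 1)) / ((sqrt 2 * sqrt 2) * (sqrt (s ^ 2 - 2) * sqrt (s ^ 2 - 2)))) by (field; split; lra).
  rewrite h1, h2, h3. field. lra.
Qed.

Definition Pgen (Y : C) : C :=
  let X := Cplus (Cmult (RtoC 4) Y) (RtoC ((s ^ 2 - 2) * kk ^ 2 / s ^ 2)) in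
  Cplus (Cmult (Cminus X (RtoC (4 * (s ^ 2 - 1) / s ^ 2)))
               (Cplus (Cmult X (Cplus X (RtoC 4))) (RtoC (- (8 * kk ^ 2 * (s ^ 2 - 2) * (s ^ 2 - 1) / s ^ 4)))))
        (Cmult (Cmult (RtoC (32 * (s ^ 2 - 2) / s ^ 2)) Y) (Cplus X (RtoC 4))).

Lemma detC_Pgen : detC r0 s kk x y = Pgen (Cmult (nuC x y) (nuC x y)).
Proof.
  assert (s ^ 2 - 2 <> 0) by lra. assert (r0 <> 0) by lra. assert (s <> 0) by lra.
  unfold detC.
  replace (Cmult (Cmult (eC s x y) (eC s x y)) (d1C r0 s kk x y))
    with (Cmult (Cmult (RtoC 64) (Cmult (Cmult (nuC x y) (nuC x y)) (Cmult (aC s) (aC s)))) (d1C r0 s kk x y))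
    by (unfold eC; ring).
  replace (Cmult (Cmult (fC s kk) (fC s kk)) (d0C r0 s kk x y))
    with (Cmult (Cmult (RtoC 16) (Cmult (Cmult (wC s) (wC s)) (Cmult (Cmult (kIC kk) (kIC kk)) (Cmult (bC s) (bC s))))) (d0C r0 s kk x y))
    by (unfold fC; ring).
  unfold d0C, d1C, d2C. rewrite aC2, bC2.
  unfold Pgen, pp, wC, kIC. cbv [Ptab].
  generalize (Cmult (nuC x y) (nuC x y)). intros [Yr Yi].
  apply injective_projections; cbv zeta; simpl.
  - field. repeat split; auto; intro; nra.
  - field. repeat split; auto; intro; nra.
Qed.
End D.

Lemma Cmult_neq0 (a b : C) : a <> RtoC 0 -> b <> RtoC 0 -> Cmult a b <> RtoC 0.
Proof.
  intros Ha Hb H. apply Hb.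
  replace b with (Cmult (Cinv a) (Cmult a b)) by (field; auto).
  rewrite H. apply injective_projections; simpl; ring.
Qed.

Lemma csqrt_ex (Yr Yi : R) : 0 < Yi -> exists x y, 0 < x /\ Cmult (x, y) (x, y) = (Yr, Yi).
Proof.
  intros hYi.
  set (m := sqrt (Yr ^ 2 + Yi ^ 2)).
  assert (hm0 : 0 <= m) by apply sqrt_pos.
  assert (hm2 : m * m = Yr ^ 2 + Yi ^ 2) by (apply sqrt_sqrt; nra).
  assert (h1 : 0 < m + Yr) by nra.
  assert (h2 : 0 < m - Yr) by nra.
  exists (sqrt ((m + Yr) / 2)), (sqrt ((m - Yr) / 2)). split.
  - apply sqrt_lt_R0; lra.
  - apply injective_projections; simpl.
    + rewrite !sqrt_sqrt by lra. field.
    + set (A := (m + Yr) / 2). set (B := (m - Yr) / 2).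
      replace (sqrt A * sqrt B + sqrt B * sqrt A) with (2 * (sqrt A * sqrt B)) by ring.
      rewrite <- sqrt_mult_alt by (unfold A; lra). unfold A, B.
      replace ((m + Yr) / 2 * ((m - Yr) / 2)) with ((Yi / 2) * (Yi / 2)) by (field_simplify; nra).
      rewrite sqrt_square by lra. field.
Qed.

Definition Pz (u Z : R) := Z ^ 3 + (8 * u - 12) * Z ^ 2 + (8 * u - 48) * Z + (32 * u - 64).
Definition discf (b c d : R) := 18 * b * c * d - 4 * b ^ 3 * d + b ^ 2 * c ^ 2 - 4 * c ^ 3 - 27 * d ^ 2.

Lemma disc_factor b c z :
  discf b c (- (z ^ 3 + b * z ^ 2 + c * z)) = ((b + z) ^ 2 - 4 * (c + b * z + z ^ 2)) * (3 * z ^ 2 + 2 * b * z + c) ^ 2.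
Proof. unfold discf. ring. Qed.

Lemma cubic_root (u : R) : 3 <= u ->
  exists zr zi Z1, 0 < zi /\
    (let b := 8 * u - 12 + Z1 in let g := 8 * u - 48 + (8 * u - 12) * Z1 + Z1 ^ 2 in
     zr = - b / 2 /\ zi * zi = (4 * g - b ^ 2) / 4) /\ Pz u Z1 = 0.
Proof.
  intros hu.
  destruct (IVT (Pz u) (- (8 * u)) 0) as [Z1 [_ HZ1]].
  - apply derivable_continuous. unfold Pz. reg.
  - lra.
  - unfold Pz. nra.
  - unfold Pz. lra.
  - set (b := 8 * u - 12 + Z1). set (g := 8 * u - 48 + (8 * u - 12) * Z1 + Z1 ^ 2).
    assert (hd : b ^ 2 - 4 * g < 0).
    { assert (E : discf (8 * u - 12) (8 * u - 48) (32 * u - 64) = (b ^ 2 - 4 * g) * (3 * Z1 ^ 2 + 2 * (8 * u - 12) * Z1 + (8 * u - 48)) ^ 2).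
      { replace (32 * u - 64) with (- (Z1 ^ 3 + (8 * u - 12) * Z1 ^ 2 + (8 * u - 48) * Z1)).
        - rewrite disc_factor. unfold b, g. ring.
        - unfold Pz in HZ1. lra. }
      assert (N : discf (8 * u - 12) (8 * u - 48) (32 * u - 64) < 0).
      { unfold discf. set (t := u - 3). replace u with (t + 3) by (unfold t; ring).
        assert (0 <= t) by (unfold t; lra).
        assert (0 <= t ^ 2) by nra. assert (0 <= t ^ 3) by (simpl; nra). assert (0 <= t ^ 4) by (simpl; nra).
        ring_simplify. nra. }
      rewrite E in N. destruct (Rlt_le_dec (b ^ 2 - 4 * g) 0) as [?|Hge]; auto.
      exfalso. assert (0 <= (3 * Z1 ^ 2 + 2 * (8 * u - 12) * Z1 + (8 * u - 48)) ^ 2) by (apply pow2_ge_0).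
      nra. }
    exists (- b / 2), (sqrt (4 * g - b ^ 2) / 2), Z1. split; [|split].
    + apply Rdiv_lt_0_compat; [apply sqrt_lt_R0; lra | lra].
    + cbv zeta. split; [reflexivity|].
      replace (sqrt (4 * g - b ^ 2) / 2 * (sqrt (4 * g - b ^ 2) / 2)) with ((sqrt (4 * g - b ^ 2) * sqrt (4 * g - b ^ 2)) / 4) by field.
      rewrite sqrt_sqrt by lra. reflexivity.
    + exact HZ1.
Qed.

Lemma d1C_eq r0 s kk x y : 0 < r0 -> 2 < s ^ 2 -> 0 < s ->
  d1C r0 s kk x y = Cplus (Cmult (RtoC 4) (Cmult (nuC x y) (nuC x y))) (RtoC ((s ^ 2 - 2) * kk ^ 2 / s ^ 2 + 4)).
Proof.
  intros hr0 hs hs0. assert (s ^ 2 - 2 <> 0) by lra. assert (r0 <> 0) by lra. assert (s <> 0) by lra.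
  unfold d1C. rewrite bC2 by auto. unfold pp, wC, kIC. cbv [Ptab].
  generalize (Cmult (nuC x y) (nuC x y)). intros [Yr Yi].
  apply injective_projections; simpl; field; repeat split; auto; intro; nra.
Qed.

Lemma ca_pos s : 2 < s ^ 2 -> 0 < s -> 0 < ca s.
Proof.
  intros. unfold ca. apply Rdiv_lt_0_compat; [apply sqrt_lt_R0; lra|].
  apply Rmult_lt_0_compat; [apply sqrt_lt_R0; lra | lra].
Qed.

Lemma C_neq0_fst (z : C) : fst z <> 0 -> z <> RtoC 0.
Proof. intros H E. apply H. rewrite E. reflexivity. Qed.
Lemma C_neq0_snd (z : C) : snd z <> 0 -> z <> RtoC 0.
Proof. intros H E. apply H. rewrite E. reflexivity. Qed.

Lemma eC_neq0 s x y : 2 < s ^ 2 -> 0 < s -> 0 < x -> eC s x y <> RtoC 0.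
Proof.
  intros. apply C_neq0_fst. unfold eC, nuC, aC. simpl.
  pose proof (ca_pos s H H0). intro E. ring_simplify in E. nra.
Qed.

Lemma mode_exists r0 s : 0 < r0 -> 2 < s ^ 2 -> 0 < s ->
  exists (k : Z) (x y : R), 0 < x /\ detC r0 s (IZR k) x y = RtoC 0 /\ cvec r0 s (IZR k) x y 0%nat <> RtoC 0.
Proof.
  intros hr0 hs hs0. set (u := s ^ 2).
  destruct (Rlt_le_dec u 3) as [hu|hu].
  - (* k = 0, real growing mode *)
    exists 0%Z. set (Yr := (3 - u) / u).
    assert (hY : 0 < Yr) by (unfold Yr; apply Rdiv_lt_0_compat; unfold u in *; lra).
    exists (sqrt Yr), 0.
    assert (hsq : Cmult (nuC (sqrt Yr) 0) (nuC (sqrt Yr) 0) = (Yr, 0)).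
    { unfold nuC. apply injective_projections; simpl; [|ring]. rewrite Rmult_0_l, Rminus_0_r. apply sqrt_sqrt; lra. }
    split; [apply sqrt_lt_R0; auto|]. split.
    + rewrite detC_Pgen by auto. rewrite hsq. unfold Pgen, Yr, u.
      assert (s <> 0) by lra.
      apply injective_projections; simpl; field; auto.
    + unfold cvec. apply Cmult_neq0.
      * apply eC_neq0; auto. apply sqrt_lt_R0; auto.
      * rewrite d1C_eq by auto. rewrite hsq. apply C_neq0_fst. simpl.
        assert (0 <= (s ^ 2 - 2) * 0 ^ 2 / s ^ 2) by (simpl; rewrite Rmult_0_l, Rmult_0_r; unfold Rdiv; lra).
        nra.
  - (* k = 1, complex growing mode *)
    exists 1%Z. destruct (cubic_root u hu) as (zr & zi & Z1 & hzi & [Hzr Hzi] & HZ1).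
    set (Yr := (zr / u - (u - 2) / u) / 4). set (Yi := zi / (4 * u)).
    assert (hu0 : 0 < u) by lra.
    assert (hYi : 0 < Yi) by (unfold Yi; apply Rdiv_lt_0_compat; lra).
    destruct (csqrt_ex Yr Yi hYi) as (x & y & hx & hxy).
    exists x, y. split; [auto|]. split.
    + rewrite detC_Pgen by auto. unfold nuC. rewrite hxy.
      set (b := 8 * u - 12 + Z1) in *. set (g := 8 * u - 48 + (8 * u - 12) * Z1 + Z1 ^ 2) in *.
      set (qr := zr * zr - zi * zi + b * zr + g). set (qi := 2 * zr * zi + b * zi).
      assert (hqr : qr = 0) by (unfold qr; rewrite Hzi, Hzr; field).
      assert (hqi : qi = 0) by (unfold qi; rewrite Hzr; field).
      assert (hs2 : s ^ 2 = u) by reflexivity.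
      apply injective_projections.
      * transitivity (((zr - Z1) * qr - zi * qi + Pz u Z1) / u ^ 3).
        -- unfold Pgen, Pz, qr, qi, b, g, Yr, Yi. cbv [fst snd Cmult Cplus Cminus Copp RtoC]. rewrite hs2.
           replace (s ^ 4) with (u * u) by (rewrite <- hs2; ring). field. lra.
        -- rewrite hqr, hqi, HZ1. simpl. field. lra.
      * transitivity (((zr - Z1) * qi + zi * qr) / u ^ 3).
        -- unfold Pgen, Pz, qr, qi, b, g, Yr, Yi. cbv [fst snd Cmult Cplus Cminus Copp RtoC]. rewrite hs2.
           replace (s ^ 4) with (u * u) by (rewrite <- hs2; ring). field. lra.
        -- rewrite hqr, hqi. simpl. field. lra.
    + unfold cvec. apply Cmult_neq0.
      * apply eC_neq0; auto.
      * rewrite d1C_eq by auto. unfold nuC. rewrite hxy. apply C_neq0_snd. simpl. nra.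
Qed.

Lemma mode_Ef lr li k (c : nat -> C) A t u :
  mode (- li, lr) k c A t u = Cmult (c A) (Ef lr li (IZR k) t u).
Proof.
  unfold mode, cexp, Ef. f_equal. simpl.
  apply injective_projections; simpl;
  (apply f_equal2; apply f_equal; ring).
Qed.

Lemma solves_real_b r0 s k x y (b : bool) :
  0 < r0 -> 2 < s ^ 2 -> 0 < s -> 1 < s -> detC r0 s (IZR k) x y = RtoC 0 ->
  solves_real r0 s (fun A t u => pr b (mode (- (y + IZR k / 2), x) k (cvec r0 s (IZR k) x y) A t u)).
Proof.
  intros hr0 hs hs0 hs1 hdet. unfold solves_real. intros B HB tau sigma.
  replace (fun A t u => pr b (mode (- (y + IZR k / 2), x) k (cvec r0 s (IZR k) x y) A t u))
    with (fmode x (y + IZR k / 2) (IZR k) b (cvec r0 s (IZR k) x y)).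
  2:{ apply functional_extensionality; intro A. apply functional_extensionality; intro t.
      apply functional_extensionality; intro u. unfold fmode. rewrite mode_Ef. reflexivity. }
  rewrite (LinNG_eq r0 s x (y + IZR k / 2) (IZR k) b (cvec r0 s (IZR k) x y) (GiC r0 s) (NCtab s) (Ptab r0 s)).
  - rewrite LL_lin by auto. rewrite Lp_null by auto.
    destruct (Nat.eqb B 2); [rewrite hdet|]; destruct b; simpl; ring.
  - intros; apply Ginv_val; auto.
  - intros; apply ncon_val; auto.
  - intros; apply Pot_val; auto.
  - auto.
Qed.

Theorem theorem1 (r0 s : R) (hr0 : 0 < r0) (hs : sqrt 2 < s) :
  exists (k : Z) (omega : C) (c : nat -> C),
    0 < Im omega /\
    (c 0%nat <> (0, 0) \/ c 1%nat <> (0, 0) \/ c 2%nat <> (0, 0)) /\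
    solves r0 s (mode omega k c).
Proof.
  assert (hs0 : 0 < s) by (pose proof (sqrt_pos 2); lra).
  assert (hs2 : 2 < s ^ 2).
  { assert (h := sqrt_sqrt 2 ltac:(lra)). pose proof (sqrt_pos 2). nra. }
  assert (hs1 : 1 < s) by nra.
  destruct (mode_exists r0 s hr0 hs2 hs0) as (k & x & y & hx & hdet & hc0).
  exists k, (- (y + IZR k / 2), x), (cvec r0 s (IZR k) x y).
  split; [simpl; exact hx|]. split; [left; exact hc0|].
  split.
  - exact (solves_real_b r0 s k x y true hr0 hs2 hs0 hs1 hdet).
  - exact (solves_real_b r0 s k x y false hr0 hs2 hs0 hs1 hdet).
Qed.
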